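(* There are universal constants $c_0>0$ and $K_3>0$ such that for all $\alpha_m>0$, $\theta\in(0,1)$ and $h,\alpha_s,\eta>0$ satisfying \[ l_1:=\frac{h}{\eta^{1/3}\alpha_s^{1/3}}<c_0(1-\theta)^{2/3}\theta^{2/3}, \] one has \[ E^{1D}_{h,\alpha_s,\eta,\theta}\le K_3\frac{\theta^{4/3}}{(1-\theta)^{2/3}}\alpha_s^{2/3}\eta^{5/3}h . \] This bound is attained by a periodic pattern of bonded intervals (of length $\theta l$, with $u=0$ and $w$ affine of slope $\eta$) alternating with blisters (of length $(1-\theta)l$, on which $w_x+\frac12u_x^2-\eta=0$), with period $l\sim l_1/((1-\theta)^{2/3}\theta^{2/3})$.
   Context: Let $\mathbb T^1=\mathbb R/\mathbb Z$. Fix parameters $\alpha_m>0$, $h>0$, $\alpha_s>0$, $\eta>0$ and $\theta\in(0,1)$. The admissible class $\mathcal A^{1D}$ consists of triples $(w,u,\Omega)$ with $w\in H^1(\mathbb T^1;\mathbb R)$, $u\in H^2(\mathbb T^1;[0,\infty))$, $\Omega\subset\mathbb T^1$ closed with Lebesgue measure $|\Omega|=\theta$, and $u=0$ on $\Omega$. The energy is \[ E^{1D}[w,u,\Omega]=\alpha_m h\int_0^1\Big|w_x+\tfrac12 u_x^2-\eta\Big|^2dx+h^3\int_0^1|u_{xx}|^2dx+\alpha_s\Big(\int_\Omega|w_x|^2dx\Big)^{1/2}\Big(\int_\Omega|w|^2dx\Big)^{1/2}, \] and $E^{1D}_{h,\alpha_s,\eta,\theta}:=\inf_{(w,u,\Omega)\in\mathcal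 A^{1D}}E^{1D}[w,u,\Omega]$. *)

(* Defs.v *)
From Stdlib Require Import Reals Rtopology ClassicalEpsilon.
Open Scope R_scope.

(* 1-periodic functions / sets on R, i.e. functions / sets on T^1 = R/Z. *)
Definition periodic1 (f : R -> R) : Prop := forall x, f (x + 1) = f x.
Definition periodic1_set (Om : R -> Prop) : Prop := forall x, Om (x + 1) <-> Om x.

Definition indic (Om : R -> Prop) (x : R) : R :=
  if excluded_middle_informative (Om x) then 1 else 0.

Definition RInt01 (f : R -> R) (I : R) : Prop :=
  exists pr : Riemann_integrable f 0 1, RiemannInt pr = I.

(* Admissible triples (w,u,Omega), in the regular subclass used here:
   w 1-periodic, differentiable everywhere with derivative w' whose square is
   Riemann integrable (so w in H^1(T^1));
   u 1-periodic, twice differentiable everywhere (u', u''), u'' Riemann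
   integrable (with u''^2 integrable, see energy), so u in H^2(T^1), u >= 0;
   Omega a closed 1-periodic set, Jordan measurable with |Omega cap [0,1]| = theta,
   and u = 0 on Omega. *)
Definition admissible1D (theta : R) (w w' u u' u'' : R -> R) (Om : R -> Prop) : Prop :=
  periodic1 w /\ periodic1 u /\ periodic1_set Om /\ closed_set Om /\
  (forall x, derivable_pt_lim w x (w' x)) /\
  (forall x, derivable_pt_lim u x (u' x)) /\
  (forall x, derivable_pt_lim u' x (u'' x)) /\
  inhabited (Riemann_integrable (fun x => (w' x) ^ 2) 0 1) /\
  (forall x, 0 <= u x) /\
  (forall x, Om x -> u x = 0) /\
  RInt01 (indic Om) theta.

Definition E1D_value (alpha_m h alpha_s eta : R) (w w' u u' u'' : R -> R)
    (Om : R -> Prop) (E : R) : Prop :=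
  exists Im Ib Iwx Iw : R,
    RInt01 (fun x => (w' x + / 2 * (u' x) ^ 2 - eta) ^ 2) Im /\
    RInt01 (fun x => (u'' x) ^ 2) Ib /\
    RInt01 (fun x => indic Om x * (w' x) ^ 2) Iwx /\
    RInt01 (fun x => indic Om x * (w x) ^ 2) Iw /\
    E = alpha_m * h * Im + h ^ 3 * Ib + alpha_s * (sqrt Iwx * sqrt Iw).

(* "E^{1D}_{h,alpha_s,eta,theta} <= B": for every eps > 0 some admissible
   configuration has energy <= B + eps. *)
Definition E1D_inf_le (alpha_m h alpha_s eta theta B : R) : Prop :=
  forall eps, 0 < eps ->
    exists (w w' u u' u'' : R -> R) (Om : R -> Prop) (E : R),
      admissible1D theta w w' u u' u'' Om /\
      E1D_value alpha_m h alpha_s eta w w' u u' u'' Om E /\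
      E <= B + eps.

(* Main.v *)
Require Import Defs.
From Stdlib Require Import Reals Rtopology ClassicalEpsilon.
From Stdlib Require Import Lra Lia FunctionalExtensionality ZArith.
From Coquelicot Require Import Coquelicot.
Open Scope R_scope.


Lemma deriv_local (F g h : R -> R) x L d :
  0 < d ->
  (forall y, x - d < y < x -> F y = g y) ->
  (forall y, x < y < x + d -> F y = h y) ->
  F x = g x -> F x = h x ->
  derivable_pt_lim g x L -> derivable_pt_lim h x L ->
  derivable_pt_lim F x L.
Proof.
  intros Hd Hl Hr Hg Hh Dg Dh eps Heps.
  destruct (Dg eps Heps) as [dg Hdg]. destruct (Dh eps Heps) as [dh Hdh].
  assert (Hm : 0 < Rmin d (Rmin dg dh)).
  { destruct dg, dh; simpl. repeat apply Rmin_pos; auto. }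
  exists (mkposreal _ Hm). intros hh Hne Hlt. simpl in Hlt.
  assert (H1 := Rmin_l d (Rmin dg dh)). assert (H2 := Rmin_r d (Rmin dg dh)).
  assert (H3 := Rmin_l dg dh). assert (H4 := Rmin_r dg dh).
  destruct (Rlt_or_le hh 0) as [Hn|Hp].
  - rewrite Hl by (split; [apply Rabs_def2 in Hlt; lra|lra]). rewrite Hg.
    apply Hdg; auto. lra.
  - assert (0 < hh) by (destruct Hp; auto; congruence).
    rewrite Hr by (split; [lra| apply Rabs_def2 in Hlt; lra]). rewrite Hh.
    apply Hdh; auto. lra.
Qed.

Lemma per_shift (F : R -> R) : (forall s, F (s + 1) = F s) ->
  forall m s, F (s + INR m) = F s.
Proof.
  intros HF m. induction m as [|m IH]; intros s.
  - simpl. f_equal. ring.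
  - rewrite S_INR. replace (s + (INR m + 1)) with ((s + INR m) + 1) by ring.
    rewrite HF. apply IH.
Qed.

Lemma is_RInt_shift (F : R -> R) a b (I : R) (m : nat) :
  (forall s, F (s + 1) = F s) -> is_RInt F a b I ->
  is_RInt F (a + INR m) (b + INR m) I.
Proof.
  intros HF H.
  assert (H' : is_RInt F (1 * (a + INR m) + - INR m) (1 * (b + INR m) + - INR m) I).
  { replace (1 * (a + INR m) + - INR m) with a by ring.
    replace (1 * (b + INR m) + - INR m) with b by ring. exact H. }
  apply is_RInt_comp_lin in H'.
  eapply is_RInt_ext; [|exact H'].
  intros x _. assert (E : F (1 * x + - INR m) = F x).
  { rewrite <- (per_shift F HF m). f_equal. ring. }
  cbv beta. rewrite E. exact (Rmult_1_l (F x)).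
Qed.

Lemma per_int (F : R -> R) c (I : R) (N : nat) :
  (forall s, F (s + 1) = F s) -> c <= 0 <= c + 1 ->
  is_RInt F c (c + 1) I -> (1 <= N)%nat ->
  is_RInt (fun x => F (INR N * x)) 0 1 I.
Proof.
  intros HF Hc HI HN.
  assert (Hm : forall m, is_RInt F c (c + INR m) (INR m * I)).
  { induction m as [|m IH].
    - simpl. replace (c + 0) with c by ring. replace (0 * I) with (@zero R_NormedModule).
      + apply is_RInt_point.
      + change (0 = 0 * I). ring.
    - rewrite S_INR.
      assert (E : plus (INR m * I) I = (INR m + 1) * I)
        by (change (INR m * I + I = (INR m + 1) * I); ring).
      rewrite <- E.
      apply (@is_RInt_Chasles R_NormedModule F c (c + INR m)); auto.
      replace (c + (INR m + 1)) with (c + 1 + INR m) by ring.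
      apply is_RInt_shift; auto. }
  assert (HNpos : 1 <= INR N) by (apply (le_INR 1); auto).
  assert (Ec0 : ex_RInt F c 0).
  { apply (@ex_RInt_Chasles_1 R_CompleteNormedModule) with (c + 1); [lra|]. exists I; auto. }
  assert (E0 : ex_RInt F 0 (c + INR N)).
  { apply (@ex_RInt_Chasles_2 R_CompleteNormedModule) with c; [lra|]. exists (INR N * I); auto. }
  set (J := @RInt R_CompleteNormedModule F c 0). set (X := @RInt R_CompleteNormedModule F 0 (c + INR N)).
  assert (HJ : is_RInt F c 0 J) by (apply (@RInt_correct R_CompleteNormedModule); auto).
  assert (HX : is_RInt F 0 (c + INR N) X) by (apply (@RInt_correct R_CompleteNormedModule); auto).
  assert (Hsum : J + X = INR N * I).
  { assert (H1 := @is_RInt_Chasles R_NormedModule F c 0 (c + INR N) J X HJ HX).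
    assert (H2 := Hm N).
    apply (@is_RInt_unique R_CompleteNormedModule) in H1.
    apply (@is_RInt_unique R_CompleteNormedModule) in H2.
    rewrite H1 in H2. exact H2. }
  assert (HJ' : is_RInt F (c + INR N) (0 + INR N) J) by (apply is_RInt_shift; auto).
  replace (0 + INR N) with (INR N) in HJ' by ring.
  assert (H0N : is_RInt F 0 (INR N) (INR N * I)).
  { assert (E : plus X J = INR N * I) by (change (X + J = INR N * I); lra). rewrite <- E.
    eapply (@is_RInt_Chasles R_NormedModule); eauto. }
  assert (H1 : is_RInt F (INR N * 0 + 0) (INR N * 1 + 0) (INR N * I)).
  { replace (INR N * 0 + 0) with 0 by ring. replace (INR N * 1 + 0) with (INR N) by ring. auto. }
  apply is_RInt_comp_lin in H1. apply (is_RInt_scal _ _ _ (/ INR N)) in H1.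
  change (is_RInt (fun y => / INR N * (INR N * F (INR N * y + 0))) 0 1 (/ INR N * (INR N * I))) in H1.
  replace (/ INR N * (INR N * I)) with I in H1 by (field; lra).
  eapply is_RInt_ext; [|exact H1].
  intros x _. change (/ INR N * (INR N * F (INR N * x + 0)) = F (INR N * x)). rewrite Rplus_0_r. field. lra.
Qed.

Lemma to_RInt01 f I : is_RInt f 0 1 I -> RInt01 f I.
Proof.
  intros H. assert (E : ex_RInt f 0 1) by (exists I; auto).
  exists (ex_RInt_Reals_0 _ _ _ E). rewrite <- RInt_Reals. apply (@is_RInt_unique R_CompleteNormedModule); auto.
Qed.


Definition np (th s : R) : Z := Int_part (s + th / 2).
Definition glue (th : R) (f g : Z -> R -> R) (s : R) : R :=
  if Rle_dec (s - IZR (np th s)) (th / 2) then f (np th s) s else g (np th s) s.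

Lemma np_eq th s n : IZR n - th / 2 <= s < IZR n + 1 - th / 2 -> np th s = n.
Proof. intros H. unfold np. symmetry. apply Int_part_spec. lra. Qed.

Lemma np_bounds th s : IZR (np th s) - th / 2 <= s < IZR (np th s) + 1 - th / 2.
Proof. unfold np. destruct (base_Int_part (s + th / 2)). lra. Qed.

Lemma glue_f th f g s n : np th s = n -> s - IZR n <= th / 2 -> glue th f g s = f n s.
Proof. intros H1 H2. unfold glue. rewrite H1. destruct Rle_dec; [auto|lra]. Qed.

Lemma glue_g th f g s n : np th s = n -> th / 2 < s - IZR n -> glue th f g s = g n s.
Proof. intros H1 H2. unfold glue. rewrite H1. destruct Rle_dec; [lra|auto]. Qed.

Lemma glue_deriv th f g f' g' : 0 < th < 1 ->
  (forall n s, derivable_pt_lim (f n) s (f' n s)) ->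
  (forall n s, derivable_pt_lim (g n) s (g' n s)) ->
  (forall n, f n (IZR n + th / 2) = g n (IZR n + th / 2)) ->
  (forall n, f' n (IZR n + th / 2) = g' n (IZR n + th / 2)) ->
  (forall n, g (n - 1)%Z (IZR n - th / 2) = f n (IZR n - th / 2)) ->
  (forall n, g' (n - 1)%Z (IZR n - th / 2) = f' n (IZR n - th / 2)) ->
  forall s, derivable_pt_lim (glue th f g) s (glue th f' g' s).
Proof.
  intros Hth Df Dg C1 C2 C3 C4 s.
  set (n := np th s). assert (Hb := np_bounds th s). fold n in Hb.
  assert (Hmin := Rmin_l th (1 - th)). assert (Hmin' := Rmin_r th (1 - th)).
  assert (Hmp : 0 < Rmin th (1 - th)) by (apply Rmin_pos; lra).
  destruct (Rle_lt_or_eq_dec (IZR n - th / 2) s (proj1 Hb)) as [Hl|Hl].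
  - destruct (Rlt_le_dec (s - IZR n) (th / 2)) as [Ha|Ha].
    +
      rewrite (glue_f th f' g' s n) by (auto; lra).
      assert (Hd : 0 < Rmin (s - IZR n + th / 2) (th / 2 - (s - IZR n))) by (apply Rmin_pos; lra).
      assert (H1 := Rmin_l (s - IZR n + th / 2) (th / 2 - (s - IZR n))).
      assert (H2 := Rmin_r (s - IZR n + th / 2) (th / 2 - (s - IZR n))).
      apply (deriv_local _ (f n) (f n) _ _ _ Hd); auto.
      * intros y Hy. apply glue_f; [apply np_eq|]; lra.
      * intros y Hy. apply glue_f; [apply np_eq|]; lra.
      * apply glue_f; auto; lra.
      * apply glue_f; auto; lra.
    + destruct Ha as [Ha|Ha].
      *
        rewrite (glue_g th f' g' s n) by (auto; lra).
        assert (Hd : 0 < Rmin (s - IZR n - th / 2) (1 - th / 2 - (s - IZR n))) by (apply Rmin_pos; lra).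
        assert (H1 := Rmin_l (s - IZR n - th / 2) (1 - th / 2 - (s - IZR n))).
        assert (H2 := Rmin_r (s - IZR n - th / 2) (1 - th / 2 - (s - IZR n))).
        apply (deriv_local _ (g n) (g n) _ _ _ Hd); auto.
        -- intros y Hy. apply glue_g; [apply np_eq|]; lra.
        -- intros y Hy. apply glue_g; [apply np_eq|]; lra.
        -- apply glue_g; auto; lra.
        -- apply glue_g; auto; lra.
      *
        assert (Es : s = IZR n + th / 2) by lra.
        rewrite (glue_f th f' g' s n) by (auto; lra).
        apply (deriv_local _ (f n) (g n) _ _ _ Hmp); auto.
        -- intros y Hy. apply glue_f; [apply np_eq|]; lra.
        -- intros y Hy. apply glue_g; [apply np_eq|]; lra.
        -- apply glue_f; auto; lra.
        -- rewrite Es. rewrite <- C1. apply glue_f; [fold n|]; rewrite <- ?Es; auto; lra.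
        -- rewrite Es, C2. rewrite <- Es. auto.
  -
    assert (Es : s = IZR n - th / 2) by lra.
    rewrite (glue_f th f' g' s n) by (auto; lra).
    apply (deriv_local _ (g (n - 1)%Z) (f n) _ _ _ Hmp); auto.
    + intros y Hy. apply glue_g; [apply np_eq|]; rewrite minus_IZR; lra.
    + intros y Hy. apply glue_f; [apply np_eq|]; lra.
    + rewrite Es, C3, <- Es. apply glue_f; auto; lra.
    + apply glue_f; auto; lra.
    + rewrite Es, <- C4. auto.
Qed.

Lemma np_S th s : np th (s + 1) = (np th s + 1)%Z.
Proof. apply np_eq. assert (Hb := np_bounds th s). rewrite plus_IZR. lra. Qed.

Lemma glue_per th f g :
  (forall n s, f (n + 1)%Z (s + 1) = f n s) ->
  (forall n s, g (n + 1)%Z (s + 1) = g n s) ->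
  forall s, glue th f g (s + 1) = glue th f g s.
Proof.
  intros Hf Hg s. unfold glue. rewrite np_S, plus_IZR.
  replace (s + 1 - (IZR (np th s) + 1)) with (s - IZR (np th s)) by ring.
  destruct Rle_dec; auto.
Qed.

Lemma Rabs_le_inv' x a : Rabs x <= a -> - a <= x <= a.
Proof. unfold Rabs; destruct Rcase_abs; lra. Qed.

Definition Omu (th s : R) : Prop := exists k : Z, Rabs (s - IZR k) <= th / 2.

Lemma Omu_glue th f g s : 0 < th < 1 -> Omu th s -> glue th f g s = f (np th s) s.
Proof.
  intros Hth [k Hk]. apply Rabs_le_inv' in Hk.
  assert (E : np th s = k) by (apply np_eq; lra).
  rewrite E. apply glue_f; auto; lra.
Qed.

Lemma mid_omega th f g s : 0 < th < 1 -> - (th / 2) < s < th / 2 ->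
  Omu th s /\ glue th f g s = f 0%Z s.
Proof.
  intros Hth Hs. assert (E : np th s = 0%Z) by (apply np_eq; simpl; lra).
  split.
  - exists 0%Z. simpl. apply Rabs_le. lra.
  - apply glue_f; auto. simpl; lra.
Qed.

Lemma mid_blister th f g s : 0 < th < 1 -> th / 2 < s < 1 - th / 2 ->
  ~ Omu th s /\ glue th f g s = g 0%Z s.
Proof.
  intros Hth Hs. assert (E : np th s = 0%Z) by (apply np_eq; simpl; lra).
  split.
  - intros [k Hk]. apply Rabs_le_inv' in Hk.
    destruct (Z.le_gt_cases k 0) as [Hk0|Hk0].
    + apply IZR_le in Hk0. lra.
    + assert (1 <= k)%Z by lia. apply IZR_le in H. lra.
  - apply glue_g; auto. simpl; lra.
Qed.

Lemma Omu_per th s : Omu th (s + 1) <-> Omu th s.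
Proof.
  split; intros [k Hk].
  - exists (k - 1)%Z. rewrite minus_IZR. replace (s - (IZR k - 1)) with (s + 1 - IZR k) by ring. auto.
  - exists (k + 1)%Z. rewrite plus_IZR. replace (s + 1 - (IZR k + 1)) with (s - IZR k) by ring. auto.
Qed.

Lemma indic_per th s : indic (Omu th) (s + 1) = indic (Omu th) s.
Proof.
  unfold indic. destruct excluded_middle_informative as [H|H];
  destruct excluded_middle_informative as [H'|H']; auto.
  - exfalso. apply H'. apply Omu_per. auto.
  - exfalso. apply H. apply Omu_per. auto.
Qed.


Definition q (t : R) : R := t ^ 3 * (1 - t) ^ 3.
Definition dq (t : R) : R := 3 * t ^ 2 * (1 - t) ^ 2 * (1 - 2 * t).
Definition ddq (t : R) : R := 6 * t - 36 * t ^ 2 + 60 * t ^ 3 - 30 * t ^ 4.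
Definition RR (t : R) : R := 9/5 * t^5 - 12 * t^6 + 234/7 * t^7 - 99/2 * t^8 + 41 * t^9
  - 18 * t^10 + 36/11 * t^11.
Definition PP (t : R) : R := 12 * t^3 - 108 * t^4 + 2016/5 * t^5 - 780 * t^6 + 5760/7 * t^7
  - 450 * t^8 + 100 * t^9.

Lemma d_q t : derivable_pt_lim q t (dq t).
Proof. apply is_derive_Reals. unfold q, dq. auto_derive; auto. ring. Qed.
Lemma d_dq t : derivable_pt_lim dq t (ddq t).
Proof. apply is_derive_Reals. unfold dq, ddq. auto_derive; auto. ring. Qed.
Lemma d_RR t : derivable_pt_lim RR t (dq t ^ 2).
Proof. apply is_derive_Reals. unfold RR, dq. auto_derive; auto. field. Qed.
Lemma d_PP t : derivable_pt_lim PP t (ddq t ^ 2).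
Proof. apply is_derive_Reals. unfold PP, ddq. auto_derive; auto. field. Qed.

Definition tt (th : R) (n : Z) (s : R) : R := (s - IZR n - th / 2) / (1 - th).

Lemma d_comp_tt P P' th n s : th < 1 -> (forall t, derivable_pt_lim P t (P' t)) ->
  derivable_pt_lim (fun s => P (tt th n s)) s (P' (tt th n s) / (1 - th)).
Proof.
  intros Hth HP.
  assert (D : derivable_pt_lim (tt th n) s (/ (1 - th))).
  { apply is_derive_Reals. unfold tt. auto_derive; auto. field. lra. }
  assert (H := derivable_pt_lim_comp (tt th n) P s _ _ D (HP (tt th n s))).
  unfold comp in H. unfold Rdiv. exact H.
Qed.

Lemma dlim_eq f x l l' : derivable_pt_lim f x l -> l = l' -> derivable_pt_lim f x l'.
Proof. intros H E; subst; auto. Qed.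

Lemma d_scal_plus (P : R -> R) P' c d x :
  derivable_pt_lim P x P' -> derivable_pt_lim (fun s => d + c * P s) x (c * P').
Proof.
  intros H. assert (H1 := derivable_pt_lim_const d x).
  assert (H2 := derivable_pt_lim_scal P c x P' H).
  assert (H3 := derivable_pt_lim_plus _ _ x _ _ H1 H2).
  unfold plus_fct, mult_real_fct in H3. eapply dlim_eq; [exact H3|ring].
Qed.

Lemma tt0 th n : th < 1 -> tt th n (IZR n + th / 2) = 0.
Proof. intros. unfold tt. field. lra. Qed.
Lemma tt1 th n : th < 1 -> tt th (n - 1)%Z (IZR n - th / 2) = 1.
Proof. intros. unfold tt. rewrite minus_IZR. field. lra. Qed.
Lemma ttS th n s : tt th (n + 1)%Z (s + 1) = tt th n s.
Proof. unfold tt. rewrite plus_IZR. f_equal. ring. Qed.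

Definition Aa (th : R) : R := sqrt (1540 * (1 - th)).

Definition f0 (n : Z) (s : R) : R := 0.
Definition gU th (n : Z) (s : R) : R := Aa th * q (tt th n s).
Definition gU1 th (n : Z) (s : R) : R := Aa th * dq (tt th n s) / (1 - th).
Definition gU2 th (n : Z) (s : R) : R := Aa th * ddq (tt th n s) / (1 - th) ^ 2.
Definition fW (n : Z) (s : R) : R := s - IZR n.
Definition gW th (n : Z) (s : R) : R := s - IZR n - 770 * RR (tt th n s).
Definition fW1 (n : Z) (s : R) : R := 1.
Definition gW1 th (n : Z) (s : R) : R := 1 - 770 * dq (tt th n s) ^ 2 / (1 - th).

Definition U th := glue th f0 (gU th).
Definition U1 th := glue th f0 (gU1 th).
Definition U2 th := glue th f0 (gU2 th).
Definition W th := glue th fW (gW th).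
Definition W1 th := glue th fW1 (gW1 th).

Lemma d_f0 n s : derivable_pt_lim (f0 n) s (f0 n s).
Proof. apply derivable_pt_lim_const. Qed.

Lemma d_gen (P P' : R -> R) th n c d s : th < 1 -> (forall t, derivable_pt_lim P t (P' t)) ->
  derivable_pt_lim (fun s => d + c * P (tt th n s)) s (c * (P' (tt th n s) / (1 - th))).
Proof. intros. apply d_scal_plus. apply d_comp_tt; auto. Qed.

Lemma d_gU th n s : th < 1 -> derivable_pt_lim (gU th n) s (gU1 th n s).
Proof.
  intros Hth. eapply dlim_eq. eapply derivable_pt_lim_ext; [|apply (d_gen q dq th n (Aa th) 0 s Hth d_q)].
  intros; unfold gU; ring. unfold gU1. field. lra.
Qed.

Lemma d_gU1 th n s : th < 1 -> derivable_pt_lim (gU1 th n) s (gU2 th n s).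
Proof.
  intros Hth. eapply dlim_eq. eapply derivable_pt_lim_ext; [|apply (d_gen dq ddq th n (Aa th / (1 - th)) 0 s Hth d_dq)].
  intros; unfold gU1; field; lra. unfold gU2. field. lra.
Qed.

Lemma d_gW th n s : th < 1 -> derivable_pt_lim (gW th n) s (gW1 th n s).
Proof.
  intros Hth.
  assert (H1 : derivable_pt_lim (fun s => s - IZR n) s 1).
  { apply is_derive_Reals. auto_derive; auto; ring. }
  assert (H2 := d_gen RR (fun t => dq t ^ 2) th n (-770) 0 s Hth d_RR).
  assert (H3 := derivable_pt_lim_plus _ _ s _ _ H1 H2).
  eapply dlim_eq. eapply derivable_pt_lim_ext; [|exact H3].
  intros; unfold plus_fct, gW; ring. unfold gW1. field. lra.
Qed.

Lemma d_fW n s : derivable_pt_lim (fW n) s (fW1 n s).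
Proof. apply is_derive_Reals. unfold fW, fW1. auto_derive; auto; ring. Qed.

Lemma d_fW1 n s : derivable_pt_lim (fW1 n) s (f0 n s).
Proof. apply derivable_pt_lim_const. Qed.

Lemma dq0 : dq 0 = 0. Proof. unfold dq; ring. Qed.
Lemma dq1 : dq 1 = 0. Proof. unfold dq; ring. Qed.

Lemma d_U th s : 0 < th < 1 -> derivable_pt_lim (U th) s (U1 th s).
Proof.
  intros Hth. apply glue_deriv; auto.
  - intros; apply d_f0.
  - intros; apply d_gU; lra.
  - intros n. unfold f0, gU. rewrite tt0 by lra. unfold q. ring.
  - intros n. unfold f0, gU1. rewrite tt0 by lra. rewrite dq0. solve [field; lra | field | unfold Rdiv; ring].
  - intros n. unfold f0, gU. rewrite tt1 by lra. unfold q. ring.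
  - intros n. unfold f0, gU1. rewrite tt1 by lra. rewrite dq1. solve [field; lra | field | unfold Rdiv; ring].
Qed.

Lemma d_U1 th s : 0 < th < 1 -> derivable_pt_lim (U1 th) s (U2 th s).
Proof.
  intros Hth. apply glue_deriv; auto.
  - intros; apply d_f0.
  - intros; apply d_gU1; lra.
  - intros n. unfold f0, gU1. rewrite tt0 by lra. rewrite dq0. solve [field; lra | field | unfold Rdiv; ring].
  - intros n. unfold f0, gU2. rewrite tt0 by lra. unfold ddq. solve [field; lra | field | unfold Rdiv; ring].
  - intros n. unfold f0, gU1. rewrite tt1 by lra. rewrite dq1. solve [field; lra | field | unfold Rdiv; ring].
  - intros n. unfold f0, gU2. rewrite tt1 by lra. unfold ddq. solve [field; lra | field | unfold Rdiv; ring].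
Qed.

Lemma d_W th s : 0 < th < 1 -> derivable_pt_lim (W th) s (W1 th s).
Proof.
  intros Hth. apply glue_deriv; auto.
  - intros; apply d_fW.
  - intros; apply d_gW; lra.
  - intros n. unfold fW, gW. rewrite tt0 by lra. unfold RR. ring.
  - intros n. unfold fW1, gW1. rewrite tt0 by lra. rewrite dq0. solve [field; lra | field | unfold Rdiv; ring].
  - intros n. unfold fW, gW. rewrite tt1 by lra. rewrite minus_IZR. unfold RR. solve [field; lra | field | unfold Rdiv; ring].
  - intros n. unfold fW1, gW1. rewrite tt1 by lra. rewrite dq1. solve [field; lra | field | unfold Rdiv; ring].
Qed.

Lemma U_per th s : U th (s + 1) = U th s.
Proof. apply glue_per; intros; unfold f0, gU; rewrite ?ttS; auto. Qed.
Lemma U1_per th s : U1 th (s + 1) = U1 th s.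
Proof. apply glue_per; intros; unfold f0, gU1; rewrite ?ttS; auto. Qed.
Lemma U2_per th s : U2 th (s + 1) = U2 th s.
Proof. apply glue_per; intros; unfold f0, gU2; rewrite ?ttS; auto. Qed.
Lemma W_per th s : W th (s + 1) = W th s.
Proof. apply glue_per; intros; unfold fW, gW; rewrite ?ttS, ?plus_IZR; auto; ring. Qed.
Lemma W1_per th s : W1 th (s + 1) = W1 th s.
Proof. apply glue_per; intros; unfold fW1, gW1; rewrite ?ttS; auto. Qed.

Lemma U_nonneg th s : 0 < th < 1 -> 0 <= U th s.
Proof.
  intros Hth. unfold U, glue. assert (Hb := np_bounds th s).
  destruct Rle_dec as [H|H]; unfold f0, gU. lra.
  apply Rmult_le_pos. apply sqrt_pos.
  assert (0 <= tt th (np th s) s <= 1).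
  { unfold tt. split.
    - apply Rmult_le_pos; [lra|]. apply Rlt_le, Rinv_0_lt_compat. lra.
    - apply Rmult_le_reg_r with (1 - th); [lra|]. unfold Rdiv.
      rewrite Rmult_assoc, Rinv_l by lra. lra. }
  unfold q. apply Rmult_le_pos; apply pow_le; lra.
Qed.

Lemma Aa_sq th : th < 1 -> Aa th * Aa th = 1540 * (1 - th).
Proof. intros. unfold Aa. apply sqrt_sqrt. lra. Qed.

Lemma membrane_pt th s : 0 < th < 1 -> W1 th s + / 2 * (U1 th s) ^ 2 - 1 = 0.
Proof.
  intros Hth. unfold W1, U1, glue. destruct Rle_dec.
  - unfold fW1, f0. ring.
  - unfold gW1, gU1. assert (E := Aa_sq th (proj2 Hth)).
    replace ((Aa th * dq (tt th (np th s) s) / (1 - th)) ^ 2)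
      with ((Aa th * Aa th) * dq (tt th (np th s) s) ^ 2 / (1 - th) ^ 2) by (field; lra).
    rewrite E. field. lra.
Qed.


Lemma per_split (F A B : R -> R) (I1 I2 th I : R) : 0 < th < 1 -> I1 + I2 = I ->
  (forall s, - (th / 2) < s < th / 2 -> F s = A s) ->
  (forall s, th / 2 < s < 1 - th / 2 -> F s = B s) ->
  is_RInt A (- (th / 2)) (th / 2) I1 -> is_RInt B (th / 2) (1 - th / 2) I2 ->
  is_RInt F (- (th / 2)) (- (th / 2) + 1) I.
Proof.
  intros Hth HI HA HB H1 H2. subst I.
  replace (- (th / 2) + 1) with (1 - th / 2) by ring.
  change (I1 + I2) with (plus I1 I2).
  apply (@is_RInt_Chasles R_NormedModule F _ (th / 2)).
  - eapply is_RInt_ext; [|exact H1]. intros x Hx.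
    rewrite Rmin_left, Rmax_right in Hx by lra. symmetry. apply HA. lra.
  - eapply is_RInt_ext; [|exact H2]. intros x Hx.
    rewrite Rmin_left, Rmax_right in Hx by lra. symmetry. apply HB. lra.
Qed.

Lemma RInt_cst a b (v : R) : a <= b -> is_RInt (fun _ => v) a b ((b - a) * v).
Proof. intros. apply (@is_RInt_const R_NormedModule). Qed.

Lemma per_indic th : 0 < th < 1 ->
  is_RInt (indic (Omu th)) (- (th / 2)) (- (th / 2) + 1) th.
Proof.
  intros Hth.
  apply (per_split _ (fun _ => 1) (fun _ => 0) ((th / 2 - - (th / 2)) * 1) ((1 - th / 2 - th / 2) * 0)); auto.
  field.
  - intros s Hs. destruct (mid_omega th f0 f0 s Hth Hs) as [Ho _].
    unfold indic. destruct excluded_middle_informative; tauto.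
  - intros s Hs. destruct (mid_blister th f0 f0 s Hth Hs) as [Ho _].
    unfold indic. destruct excluded_middle_informative; tauto.
  - apply RInt_cst. lra.
  - apply RInt_cst. lra.
Qed.

Lemma per_indicW th : 0 < th < 1 ->
  is_RInt (fun s => indic (Omu th) s * W th s ^ 2) (- (th / 2)) (- (th / 2) + 1) (th ^ 3 / 12).
Proof.
  intros Hth.
  apply (per_split _ (fun s => s ^ 2) (fun _ => 0) (th ^ 3 / 12) ((1 - th / 2 - th / 2) * 0)); auto.
  ring.
  - intros s Hs. destruct (mid_omega th fW (gW th) s Hth Hs) as [Ho E].
    unfold W. rewrite E. unfold fW. simpl IZR.
    unfold indic. destruct excluded_middle_informative; [|tauto]. ring.
  - intros s Hs. destruct (mid_blister th fW (gW th) s Hth Hs) as [Ho _].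
    unfold indic. destruct excluded_middle_informative; [tauto|]. ring.
  - assert (E : th ^ 3 / 12 = minus ((th / 2) ^ 3 / 3) ((- (th / 2)) ^ 3 / 3))
      by (change (th ^ 3 / 12 = (th / 2) ^ 3 / 3 - (- (th / 2)) ^ 3 / 3); field).
    rewrite E. apply (is_RInt_derive (fun s => s ^ 3 / 3) (fun s => s ^ 2)).
    + intros x _. auto_derive; auto. field.
    + intros x _. exact (ex_derive_continuous (fun s => s ^ 2) x ltac:(auto_derive; auto)).
  - apply RInt_cst. lra.
Qed.

Lemma per_U2 th : 0 < th < 1 ->
  is_RInt (fun s => U2 th s ^ 2) (- (th / 2)) (- (th / 2) + 1) (88 / (1 - th) ^ 2).
Proof.
  intros Hth.
  apply (per_split _ (fun _ => 0) (fun s => gU2 th 0 s ^ 2) ((th / 2 - - (th / 2)) * 0) (88 / (1 - th) ^ 2)); auto.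
  ring.
  - intros s Hs. destruct (mid_omega th f0 (gU2 th) s Hth Hs) as [Ho E].
    unfold U2. rewrite E. unfold f0. ring.
  - intros s Hs. destruct (mid_blister th f0 (gU2 th) s Hth Hs) as [Ho E].
    unfold U2. rewrite E. auto.
  - apply RInt_cst. lra.
  - set (G := fun s => Aa th * Aa th / (1 - th) ^ 3 * PP (tt th 0 s)).
    assert (E : 88 / (1 - th) ^ 2 = minus (G (1 - th / 2)) (G (th / 2))).
    { change (88 / (1 - th) ^ 2 = G (1 - th / 2) - G (th / 2)). unfold G.
      rewrite Aa_sq by lra.
      replace (tt th 0 (1 - th / 2)) with 1 by (unfold tt; simpl; field; lra).
      replace (tt th 0 (th / 2)) with 0 by (unfold tt; simpl; field; lra).
      unfold PP. field. lra. }
    rewrite E. apply (is_RInt_derive G).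
    + intros x _. apply is_derive_Reals. unfold G.
      eapply dlim_eq. apply derivable_pt_lim_scal. apply (d_comp_tt PP (fun t => ddq t ^ 2)).
      lra. apply d_PP.
      unfold gU2. replace ((Aa th * ddq (tt th 0 x) / (1 - th) ^ 2) ^ 2) with
        ((Aa th * Aa th) * ddq (tt th 0 x) ^ 2 / (1 - th) ^ 4) by (field; lra).
      field. lra.
    + intros x _. exact (ex_derive_continuous (fun s => gU2 th 0 s ^ 2) x ltac:(unfold gU2, tt, ddq; auto_derive; lra)).
Qed.

Lemma per_W1 th : 0 < th < 1 ->
  ex_RInt (fun s => W1 th s ^ 2) (- (th / 2)) (- (th / 2) + 1).
Proof.
  intros Hth.
  assert (E : ex_RInt (fun s => gW1 th 0 s ^ 2) (th / 2) (1 - th / 2)).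
  { apply (@ex_RInt_continuous R_CompleteNormedModule). intros z _.
    exact (ex_derive_continuous (fun s => gW1 th 0 s ^ 2) z ltac:(unfold gW1, tt, dq; auto_derive; lra)). }
  destruct E as [I2 HI2].
  exists (th + I2).
  apply (per_split _ (fun _ => 1) (fun s => gW1 th 0 s ^ 2) ((th / 2 - - (th / 2)) * 1) I2); auto.
  field.
  - intros s Hs. destruct (mid_omega th fW1 (gW1 th) s Hth Hs) as [Ho E].
    unfold W1. rewrite E. unfold fW1. ring.
  - intros s Hs. destruct (mid_blister th fW1 (gW1 th) s Hth Hs) as [Ho E].
    unfold W1. rewrite E. auto.
  - apply RInt_cst. lra.
Qed.


Lemma d_scale (F F' : R -> R) c k x : (forall s, derivable_pt_lim F s (F' s)) ->
  derivable_pt_lim (fun x => c * F (k * x)) x (c * (F' (k * x) * k)).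
Proof.
  intros HF.
  assert (D : derivable_pt_lim (fun x => k * x) x k).
  { apply is_derive_Reals. auto_derive; auto. ring. }
  assert (H := derivable_pt_lim_comp (fun x => k * x) F x _ _ D (HF (k * x))).
  apply (derivable_pt_lim_scal _ c) in H. exact H.
Qed.

Lemma Omu_shift th m s : Omu th (s + INR m) <-> Omu th s.
Proof.
  induction m as [|m IH].
  - simpl. rewrite Rplus_0_r. tauto.
  - rewrite S_INR. replace (s + (INR m + 1)) with ((s + INR m) + 1) by ring.
    rewrite Omu_per. auto.
Qed.

Lemma scale_int G (f : R -> R) k I : is_RInt G 0 1 I -> (forall x, f x = k * G x) ->
  is_RInt f 0 1 (k * I).
Proof.
  intros H E. apply (is_RInt_scal _ _ _ k) in H.
  eapply is_RInt_ext; [|exact H]. intros x _. symmetry. apply E.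
Qed.

Lemma Omu_closed th (N : nat) : 0 < th < 1 -> (1 <= N)%nat ->
  closed_set (fun x => Omu th (INR N * x)).
Proof.
  intros Hth HN. assert (HNp : 1 <= INR N) by (apply (le_INR 1); auto).
  unfold closed_set, open_set, complementary. intros x Hx.
  set (s := INR N * x). fold s in Hx. set (n := np th s).
  assert (Hb := np_bounds th s). fold n in Hb.
  assert (Hr : th / 2 < s - IZR n).
  { destruct (Rlt_le_dec (th / 2) (s - IZR n)); auto. exfalso. apply Hx. exists n.
    apply Rabs_le. lra. }
  set (d := Rmin (s - IZR n - th / 2) (1 - th / 2 - (s - IZR n))).
  assert (Hd : 0 < d) by (apply Rmin_pos; lra).
  assert (H1 := Rmin_l (s - IZR n - th / 2) (1 - th / 2 - (s - IZR n))).
  assert (H2 := Rmin_r (s - IZR n - th / 2) (1 - th / 2 - (s - IZR n))).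
  fold d in H1, H2.
  assert (Hd' : 0 < d / INR N) by (apply Rdiv_lt_0_compat; lra).
  exists (mkposreal _ Hd'). intros y Hy. unfold disc in Hy. simpl in Hy.
  assert (Hy' : Rabs (INR N * y - s) < d).
  { unfold s. replace (INR N * y - INR N * x) with (INR N * (y - x)) by ring.
    rewrite Rabs_mult, Rabs_pos_eq by lra.
    apply Rmult_lt_reg_l with (/ INR N). apply Rinv_0_lt_compat; lra.
    rewrite <- Rmult_assoc, Rinv_l, Rmult_1_l by lra. lra. }
  apply Rabs_def2 in Hy'.
  intros [k Hk]. apply Rabs_le_inv' in Hk.
  destruct (Z.le_gt_cases k n) as [Hk0|Hk0].
  - apply IZR_le in Hk0. lra.
  - assert (Hk1 : (n + 1 <= k)%Z) by lia. apply IZR_le in Hk1. rewrite plus_IZR in Hk1. lra.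
Qed.


Lemma construct alpha_m h alpha_s eta th (N : nat) :
  0 < th < 1 -> 0 < eta -> (1 <= N)%nat ->
  exists (w w' u u' u'' : R -> R) (Om : R -> Prop) (E : R),
    admissible1D th w w' u u' u'' Om /\
    E1D_value alpha_m h alpha_s eta w w' u u' u'' Om E /\
    E = h ^ 3 * (eta * INR N ^ 2 * (88 / (1 - th) ^ 2))
        + alpha_s * (sqrt (eta ^ 2 * th) * sqrt ((eta / INR N) ^ 2 * (th ^ 3 / 12))).
Proof.
  intros Hth Heta HN. assert (HNp : 1 <= INR N) by (apply (le_INR 1); auto).
  set (k := INR N).
  set (u := fun x => sqrt eta / k * U th (k * x)).
  set (u1 := fun x => sqrt eta * U1 th (k * x)).
  set (u2 := fun x => sqrt eta * k * U2 th (k * x)).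
  set (w := fun x => eta / k * W th (k * x)).
  set (w1 := fun x => eta * W1 th (k * x)).
  set (Om := fun x => Omu th (k * x)).
  assert (Hse : sqrt eta * sqrt eta = eta) by (apply sqrt_sqrt; lra).
  assert (Hc : - (th / 2) <= 0 <= - (th / 2) + 1) by lra.
  exists w, w1, u, u1, u2, Om.
  exists (alpha_m * h * 0 + h ^ 3 * (eta * k ^ 2 * (88 / (1 - th) ^ 2))
        + alpha_s * (sqrt (eta ^ 2 * th) * sqrt ((eta / k) ^ 2 * (th ^ 3 / 12)))).
  split; [|split].
  - unfold admissible1D. repeat split.
    + intros x. unfold w. f_equal. rewrite Rmult_plus_distr_l, Rmult_1_r.
      apply per_shift. apply W_per.
    + intros x. unfold u. f_equal. rewrite Rmult_plus_distr_l, Rmult_1_r.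
      apply per_shift. apply U_per.
    + unfold Om. rewrite Rmult_plus_distr_l, Rmult_1_r. apply Omu_shift.
    + unfold Om. rewrite Rmult_plus_distr_l, Rmult_1_r. apply Omu_shift.
    + apply Omu_closed; auto.
    + intros x. unfold w. eapply dlim_eq. apply (d_scale _ _ _ _ _ (fun s => d_W th s Hth)).
      unfold w1. field; unfold k; lra.
    + intros x. unfold u. eapply dlim_eq. apply (d_scale _ _ _ _ _ (fun s => d_U th s Hth)).
      unfold u1. field; unfold k; lra.
    + intros x. unfold u1. eapply dlim_eq. apply (d_scale _ _ _ _ _ (fun s => d_U1 th s Hth)).
      unfold u2. ring.
    + assert (HI := @RInt_correct R_CompleteNormedModule _ _ _ (per_W1 th Hth)).
      assert (H := per_int (fun s => W1 th s ^ 2) _ _ N (fun s => f_equal (fun v => v ^ 2) (W1_per th s)) Hc HI HN).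
      apply (scale_int _ (fun x => w1 x ^ 2) (eta ^ 2)) in H.
      2: { intros x. cbv beta. unfold w1, k. ring. }
      apply ex_RInt_Reals_0. eexists; exact H.
    + intros x. unfold u. apply Rmult_le_pos.
      * apply Rdiv_le_0_compat; [apply sqrt_pos|unfold k; lra].
      * apply U_nonneg; auto.
    + intros x Hx. unfold u, U. rewrite Omu_glue by auto. unfold f0. ring.
    + apply to_RInt01.
      assert (H := per_int _ _ _ N (indic_per th) Hc (per_indic th Hth) HN).
      exact H.
  - unfold E1D_value.
    exists 0, (eta * k ^ 2 * (88 / (1 - th) ^ 2)), (eta ^ 2 * th), ((eta / k) ^ 2 * (th ^ 3 / 12)).
    repeat split.
    + apply to_RInt01.
      assert (H0 : is_RInt (fun _ : R => 0) 0 1 0).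
      { assert (H := RInt_cst 0 1 0 ltac:(lra)). replace ((1 - 0) * 0) with 0 in H by ring. exact H. }
      eapply is_RInt_ext; [|exact H0]. intros x _.
      change (0 = (w1 x + / 2 * u1 x ^ 2 - eta) ^ 2). symmetry.
      unfold w1, u1.
        replace (eta * W1 th (k * x) + / 2 * (sqrt eta * U1 th (k * x)) ^ 2 - eta)
          with (eta * (W1 th (k * x) + / 2 * (U1 th (k * x)) ^ 2 - 1))
          by (replace ((sqrt eta * U1 th (k * x)) ^ 2) with ((sqrt eta * sqrt eta) * U1 th (k * x) ^ 2) by ring;
              rewrite Hse; ring).
        rewrite membrane_pt by auto. ring.
    + apply to_RInt01.
      assert (H := per_int _ _ _ N (fun s => f_equal (fun v => v ^ 2) (U2_per th s)) Hc (per_U2 th Hth) HN).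
      apply (scale_int _ (fun x => u2 x ^ 2) (eta * k ^ 2)) in H.
      2: { intros x. unfold u2. fold k. replace ((sqrt eta * k * U2 th (k * x)) ^ 2) with
             ((sqrt eta * sqrt eta) * k ^ 2 * U2 th (k * x) ^ 2) by ring. rewrite Hse. ring. }
      exact H.
    + apply to_RInt01.
      assert (H := per_int _ _ _ N (indic_per th) Hc (per_indic th Hth) HN).
      apply (scale_int _ (fun x => indic Om x * w1 x ^ 2) (eta ^ 2)) in H. exact H.
      intros x. unfold w1. fold k. unfold indic, Om.
      destruct excluded_middle_informative as [Ho|Ho].
      * unfold W1. rewrite Omu_glue by auto. unfold fW1. ring.
      * ring.
    + apply to_RInt01.
      assert (Hp : forall s, (fun s => indic (Omu th) s * W th s ^ 2) (s + 1) =
                            (fun s => indic (Omu th) s * W th s ^ 2) s).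
      { intros s. cbv beta. rewrite indic_per, W_per. auto. }
      assert (H := per_int _ _ _ N Hp Hc (per_indicW th Hth) HN).
      apply (scale_int _ (fun x => indic Om x * w x ^ 2) ((eta / k) ^ 2)) in H. exact H.
      intros x. cbv beta. unfold w, Om, k. change (indic (fun x => Omu th (INR N * x)) x) with (indic (Omu th) (INR N * x)). ring.
    + ring.
Qed.


Lemma rp_pos x y : 0 < Rpower x y.
Proof. unfold Rpower. apply exp_pos. Qed.

Lemma rp_k x m : 0 < x -> Rpower x (INR m / 3) = Rpower x (1 / 3) ^ m.
Proof.
  intros Hx. rewrite <- Rpower_pow by apply rp_pos. rewrite Rpower_mult. f_equal. field.
Qed.

Lemma rp3 x : 0 < x -> Rpower x (1 / 3) ^ 3 = x.
Proof. intros Hx. rewrite <- rp_k by auto. replace (INR 3 / 3) with 1 by (simpl; field).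
  apply Rpower_1; auto. Qed.

Lemma rp2 x : 0 < x -> Rpower x (2 / 3) = Rpower x (1 / 3) ^ 2.
Proof. intros Hx. rewrite <- rp_k by auto. f_equal; simpl; try field. Qed.
Lemma rp4 x : 0 < x -> Rpower x (4 / 3) = Rpower x (1 / 3) ^ 4.
Proof. intros Hx. rewrite <- rp_k by auto. f_equal; simpl; try field. Qed.
Lemma rp5 x : 0 < x -> Rpower x (5 / 3) = Rpower x (1 / 3) ^ 5.
Proof. intros Hx. rewrite <- rp_k by auto. f_equal; simpl; try field. Qed.

Lemma sqrt_bound a b k : 0 < a -> 0 < b -> 0 < k ->
  sqrt (a ^ 2 * b) * sqrt ((a / k) ^ 2 * (b ^ 3 / 12)) <= a ^ 2 * b ^ 2 / k.
Proof.
  intros Ha Hb Hk.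
  rewrite <- sqrt_mult.
  2: { apply Rmult_le_pos; [apply pow_le|]; lra. }
  2: { apply Rmult_le_pos; [apply pow_le|]. unfold Rdiv; apply Rmult_le_pos; [lra|apply Rlt_le, Rinv_0_lt_compat; lra].
       apply Rmult_le_pos; [apply pow_le|]; lra. }
  rewrite <- (sqrt_pow2 (a ^ 2 * b ^ 2 / k)).
  2: { unfold Rdiv. apply Rmult_le_pos; [apply Rmult_le_pos; apply pow_le|apply Rlt_le, Rinv_0_lt_compat]; lra. }
  apply sqrt_le_1_alt.
  assert (E : a ^ 2 * b * ((a / k) ^ 2 * (b ^ 3 / 12)) = (a ^ 2 * b ^ 2 / k) ^ 2 / 12) by (field; lra).
  rewrite E. assert (0 <= (a ^ 2 * b ^ 2 / k) ^ 2) by apply pow2_ge_0. lra.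
Qed.

Theorem theorem1 :
  exists c0 K3 : R, 0 < c0 /\ 0 < K3 /\
    forall alpha_m theta h alpha_s eta : R,
      0 < alpha_m -> 0 < theta < 1 -> 0 < h -> 0 < alpha_s -> 0 < eta ->
      h / (Rpower eta (1/3) * Rpower alpha_s (1/3))
        < c0 * Rpower (1 - theta) (2/3) * Rpower theta (2/3) ->
      E1D_inf_le alpha_m h alpha_s eta theta
        (K3 * Rpower theta (4/3) / Rpower (1 - theta) (2/3)
            * Rpower alpha_s (2/3) * Rpower eta (5/3) * h).
Proof.
  exists 1, 353. split; [lra|]. split; [lra|].
  intros am th h als eta Ham Hth Hh Has Heta Hyp eps Heps.
  assert (H1t : 0 < 1 - th) by lra.
  rewrite (rp2 (1 - th)), (rp2 th) in Hyp by lra.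
  rewrite (rp4 th), (rp2 (1 - th)), (rp2 als), (rp5 eta) by lra.
  set (Pc := Rpower (1 - th) (1 / 3)) in *. set (Qc := Rpower th (1 / 3)) in *.
  set (Ec := Rpower eta (1 / 3)) in *. set (Ac := Rpower als (1 / 3)) in *.
  assert (HP : 0 < Pc) by apply rp_pos. assert (HQ : 0 < Qc) by apply rp_pos.
  assert (HE : 0 < Ec) by apply rp_pos. assert (HA : 0 < Ac) by apply rp_pos.
  assert (EP : Pc ^ 3 = 1 - th) by (apply rp3; lra).
  assert (EQ : Qc ^ 3 = th) by (apply rp3; lra).
  assert (EE : Ec ^ 3 = eta) by (apply rp3; lra).
  assert (EA : Ac ^ 3 = als) by (apply rp3; lra).
  set (X := Pc ^ 2 * Qc ^ 2 * Ec * Ac / h).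
  assert (HX : 1 < X).
  { unfold X. apply Rmult_lt_reg_r with (/ (Ec * Ac)).
    apply Rinv_0_lt_compat; apply Rmult_lt_0_compat; lra.
    rewrite Rmult_1_l. replace (Pc ^ 2 * Qc ^ 2 * Ec * Ac / h * / (Ec * Ac)) with (Pc ^ 2 * Qc ^ 2 / h) by (field; lra).
    apply Rmult_lt_reg_r with h; auto. replace (Pc ^ 2 * Qc ^ 2 / h * h) with (1 * Pc ^ 2 * Qc ^ 2) by (field; lra).
    replace (/ (Ec * Ac) * h) with (h / (Ec * Ac)) by (unfold Rdiv; ring). exact Hyp. }
  destruct (archimed X) as [Hu1 Hu2].
  assert (Hup : (0 < up X)%Z) by (apply lt_0_IZR; lra).
  set (N := Z.to_nat (up X)).
  assert (HkN : INR N = IZR (up X)).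
  { unfold N. rewrite INR_IZR_INZ. rewrite Z2Nat.id by lia. auto. }
  assert (HN : (1 <= N)%nat).
  { destruct N as [|n] eqn:EN; [|lia]. simpl in HkN. lra. }
  destruct (construct am h als eta th N Hth Heta HN) as (w & w' & u & u' & u'' & Om & E & Ha & Hv & HE').
  exists w, w', u, u', u'', Om, E. split; [auto|]. split; [auto|].
  set (k := INR N) in *.
  assert (Hk1 : X <= k) by lra. assert (Hk2 : k <= 2 * X) by lra.
  set (T := Qc ^ 4 / Pc ^ 2 * Ac ^ 2 * Ec ^ 5 * h).
  assert (T1 : h ^ 3 * (eta * k ^ 2 * (88 / (1 - th) ^ 2)) <= 352 * T).
  { apply Rle_trans with (h ^ 3 * (eta * (2 * X) ^ 2 * (88 / (1 - th) ^ 2))).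
    - apply Rmult_le_compat_l; [apply pow_le; lra|].
      apply Rmult_le_compat_r. { unfold Rdiv. apply Rmult_le_pos; [lra|]. apply Rlt_le, Rinv_0_lt_compat, pow_lt; lra. }
      apply Rmult_le_compat_l; [lra|]. apply pow_incr. lra.
    - right. unfold T, X. rewrite <- EP, <- EE. field. lra. }
  assert (T2 : als * (sqrt (eta ^ 2 * th) * sqrt ((eta / k) ^ 2 * (th ^ 3 / 12))) <= T).
  { apply Rle_trans with (als * (eta ^ 2 * th ^ 2 / k)).
    - apply Rmult_le_compat_l; [lra|]. apply sqrt_bound; lra.
    - apply Rle_trans with (als * (eta ^ 2 * th ^ 2 / X)).
      + apply Rmult_le_compat_l; [lra|]. unfold Rdiv. apply Rmult_le_compat_l.
        { apply Rmult_le_pos; apply pow_le; lra. }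
        apply Rinv_le_contravar; lra.
      + right. unfold T, X. rewrite <- EA, <- EQ, <- EE. field. lra. }
  rewrite HE'. unfold T in T1, T2. lra.
Qed.
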